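(* Let $N\ge1$, $1\le S\le N$, $L$ a band-width vector, $\dot W$ an $L$-admissible matrix, $W_\varepsilon=\mathrm{Id}+\varepsilon\dot W$, $k\in\mathbb Z$, and $\beta\in\mathbb R^S$ such that $e^{-2\pi ik\beta_1},\dots,e^{-2\pi ik\beta_S}$ are pairwise distinct. Put $P_{\varepsilon,\beta}=D_{k,\beta,L}W_\varepsilon$. Suppose that for every sufficiently small $\varepsilon>0$ we are given a unit-norm $f_\varepsilon\in\mathbb C^N$ and $\lambda_\varepsilon\in\mathbb C$ with $P_{\varepsilon,\beta}f_\varepsilon=\lambda_\varepsilon f_\varepsilon$ and $\lambda_\varepsilon\to e^{-2\pi ik\beta_s}$ as $\varepsilon\to0$ for some $s\in\{1,\dots,S\}$. Then every accumulation point of $\{f_\varepsilon\}$ as $\varepsilon\to0$ is an eigenvector of $\hat P_{k,\beta,L}$.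
   Context: A band-width vector is $L=(L_1,\dots,L_S)$ of positive integers with $\sum_sL_s=N$; $N_0=0$, $N_s=N_{s-1}+L_s$, $B_s=\{j:N_{s-1}<j\le N_s\}$. $D_{k,\beta,L}$ is the diagonal matrix with $j$-th entry $e^{-2\pi ik\beta_s}$ for $j\in B_s$. $\dot W$ is $L$-admissible if it is real symmetric and (1) $\dot W_{ij}\ge0$ for $i\ne j$, $\sum_j\dot W_{ij}=0$ for all $i$; (2) $\dot W$ has $N$ distinct eigenvalues; (3) each $\hat W_s=(\dot W_{jk})_{j,k\in B_s}$ has $L_s$ distinct eigenvalues. $\hat W_L$ is block diagonal with blocks $\hat W_1,\dots,\hat W_S$ and $\hat P_{k,\beta,L}=D_{k,\beta,L}\hat W_L$. *)

(* Defs.v *)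
From HB Require Import structures.
From mathcomp Require Import all_boot all_order all_algebra.
From mathcomp Require Import all_classical all_reals all_analysis.
From mathcomp Require Import complex.
Set Implicit Arguments. Unset Strict Implicit. Unset Printing Implicit Defensive.
Import Order.TTheory GRing.Theory Num.Theory.
Local Open Scope ring_scope.
Local Open Scope complex_scope.

Section Defs.
Variable R : realType.
Local Notation C := R[i].

Definition expi (x : R) : C := Complex (cos x) (sin x).

Definition bandwidth (N S : nat) (L : 'I_S -> nat) : Prop :=
  (forall s, (0 < L s)%N) /\ (\sum_(s < S) L s)%N = N.

(* N_{s-1} (with 0-based block index s) *)
Definition Nprev (S : nat) (L : 'I_S -> nat) (s : 'I_S) : nat :=
  (\sum_(t < S | (t < s)%N) L t)%N.

(* j (0-based) lies in block B_s, i.e. N_{s-1} < j+1 <= N_s *)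
Definition inblock (S : nat) (L : 'I_S -> nat) (s : 'I_S) (j : nat) : bool :=
  (Nprev L s <= j)%N && (j < Nprev L s + L s)%N.

Definition mxget (N : nat) (A : 'M[R]_N) (i j : nat) : R :=
  match insub i, insub j with
  | Some i', Some j' => A i' j'
  | _, _ => 0
  end.

Definition blockmx (N S : nat) (L : 'I_S -> nat) (W : 'M[R]_N) (s : 'I_S)
  : 'M[R]_(L s) :=
  \matrix_(a < L s, b < L s) mxget W (Nprev L s + a) (Nprev L s + b).

Definition distinct_eigs (n : nat) (A : 'M[R]_n) : Prop :=
  exists ev : 'I_n -> R, injective ev /\ forall i, eigenvalue A (ev i).

Definition admissible (N S : nat) (L : 'I_S -> nat) (W : 'M[R]_N) : Prop :=
  [/\ W^T = W,
      (forall i j, i != j -> 0 <= W i j),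
      (forall i, \sum_j W i j = 0),
      distinct_eigs W
    & forall s, distinct_eigs (blockmx L W s)].

Definition cmx (N : nat) (A : 'M[R]_N) : 'M[C]_N := map_mx (fun x => x%:C) A.

Definition Dmx (N S : nat) (L : 'I_S -> nat) (k : int) (beta : 'I_S -> R)
  : 'M[C]_N :=
  \matrix_(i, j) (if i == j then
     \sum_(s < S | inblock L s i) expi (- (2 * pi * k%:~R * beta s))
   else 0).

Definition What (N S : nat) (L : 'I_S -> nat) (W : 'M[R]_N) : 'M[R]_N :=
  \matrix_(i, j) (if [exists s, inblock L s i && inblock L s j]
                  then W i j else 0).

Definition Phat (N S : nat) (L : 'I_S -> nat) (k : int) (beta : 'I_S -> R)
  (W : 'M[R]_N) : 'M[C]_N := Dmx N L k beta *m cmx (What L W).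

Definition Peps (N S : nat) (L : 'I_S -> nat) (k : int) (beta : 'I_S -> R)
  (W : 'M[R]_N) (eps : R) : 'M[C]_N :=
  Dmx N L k beta *m cmx (1%:M + eps *: W).

(* squared Euclidean norm of a complex vector (a nonnegative real in C) *)
Definition vnorm2 (N : nat) (f : 'cV[C]_N) : C := \sum_j `|f j 0| ^+ 2.

End Defs.

(* Main.v *)
Require Import Defs.
From HB Require Import structures.
From mathcomp Require Import all_boot all_order all_algebra.
From mathcomp Require Import all_classical all_reals all_analysis.
From mathcomp Require Import complex.
From mathcomp Require Import lra ring zify.
Set Implicit Arguments. Unset Strict Implicit. Unset Printing Implicit Defensive.
Import Order.TTheory GRing.Theory Num.Theory.
Local Open Scope ring_scope.
Local Open Scope complex_scope.

Section H.
Variable R : realType.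
Local Notation C := R[i].
Local Notation nc := (@Normc.normc R).

Lemma ncE (z : C) : `|z| = (nc z)%:C. Proof. by []. Qed.
Lemma nc_ge0 (z : C) : 0 <= nc z. Proof. by case: z => a b; rewrite /= sqrtr_ge0. Qed.
Lemma ncD (x y : C) : nc (x + y) <= nc x + nc y. Proof. exact: le_normcD. Qed.
Lemma ncM (x y : C) : nc (x * y) = nc x * nc y. Proof. exact: Normc.normcM. Qed.
Lemma ncN (x : C) : nc (- x) = nc x. Proof. exact: normcN. Qed.
Lemma ncB (x y : C) : nc (x - y) = nc (y - x). Proof. by rewrite -ncN opprB. Qed.
Lemma nc_eq0 (x : C) : nc x = 0 -> x = 0. Proof. exact: Normc.eq0_normc. Qed.
Lemma ncR (a : R) : nc a%:C = `|a|.
Proof. by rewrite /= expr0n /= addr0 sqrtr_sqr. Qed.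
Lemma nc_expi (x : R) : nc (expi x) = 1.
Proof. by rewrite /expi /= cos2Dsin2 sqrtr1. Qed.
Lemma nc_sum (I : Type) (r : seq I) (P : pred I) (F : I -> C) :
  nc (\sum_(i <- r | P i) F i) <= \sum_(i <- r | P i) nc (F i).
Proof.
apply: (big_ind2 (fun x y => nc x <= y)) => //; first by rewrite Normc.normc0.
by move=> x1 x2 y1 y2 h1 h2; apply: le_trans (ncD _ _) _; apply: lerD.
Qed.

Lemma vn_le (N : nat) (v : 'cV[C]_N) j : ((nc (v j 0)) ^+ 2)%:C <= vnorm2 v.
Proof.
have -> : ((nc (v j 0)) ^+ 2)%:C = `|v j 0| ^+ 2 by rewrite rmorphXn.
rewrite /vnorm2 (bigD1 j) //= lerDl.
by apply: sumr_ge0 => l _; rewrite exprn_ge0.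
Qed.

Lemma vn1 (N : nat) (v : 'cV[C]_N) j : vnorm2 v = 1 -> nc (v j 0) <= 1.
Proof.
move=> h; have := vn_le v j; rewrite h -[1]/(1%:C) lecR => h2.
have := nc_ge0 (v j 0); nra.
Qed.

Lemma vnlt (N : nat) (v : 'cV[C]_N) j (r : R) : 0 < r ->
  vnorm2 v < (r ^+ 2)%:C -> nc (v j 0) < r.
Proof.
move=> r0 h; have := le_lt_trans (vn_le v j) h; rewrite ltcR => h2.
have := nc_ge0 (v j 0); nra.
Qed.


Definition wf (N : nat) (W : 'M[R]_N) (v : 'cV[C]_N) (i : 'I_N) : C :=
  \sum_j (W i j)%:C * v j 0.

Lemma Nprev_mono (S : nat) (L : 'I_S -> nat) (t u : 'I_S) :
  (t < u)%N -> (Nprev L t + L t <= Nprev L u)%N.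
Proof.
rewrite /Nprev => tu.
have -> : (\sum_(v < S | (v < t)%N) L v + L t = \sum_(v < S | (v < t.+1)%N) L v)%N.
  rewrite [RHS](bigD1 t) //= addnC; congr (_ + _); apply: eq_bigl => v /=.
  by rewrite -val_eqE /= ltnS; case: ltngtP.
rewrite [leqRHS]big_mkcond [leqLHS]big_mkcond /=; apply: leq_sum => v _.
by case: ifP; case: ifP => //; lia.
Qed.

Lemma inblock_uniq (S : nat) (L : 'I_S -> nat) (t u : 'I_S) j :
  inblock L t j -> inblock L u j -> t = u.
Proof.
wlog tu : t u / (t <= u)%N.
  move=> H h1 h2; case: (leqP t u) => c; first exact: H.
  by symmetry; apply: H => //; apply: ltnW.
rewrite /inblock => /andP [h1 h2] /andP [h3 h4].
case: (ltnP t u) => c; last by apply: val_inj; apply/eqP; rewrite eqn_leq tu c.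
have := Nprev_mono L c; lia.
Qed.

Definition ee (S : nat) (k : int) (beta : 'I_S -> R) (t : 'I_S) : C :=
  expi (- (2 * pi * k%:~R * beta t)).

Lemma Dmx_off (N S : nat) (L : 'I_S -> nat) (k : int) (beta : 'I_S -> R) (i j : 'I_N) :
  i != j -> Dmx N L k beta i j = 0.
Proof. by move=> h; rewrite mxE (negbTE h). Qed.

Lemma Dmx_in (N S : nat) (L : 'I_S -> nat) (k : int) (beta : 'I_S -> R) (i : 'I_N) t :
  inblock L t i -> Dmx N L k beta i i = ee k beta t.
Proof.
move=> ht; rewrite mxE eqxx (bigD1 t) //= big1 ?addr0 // => u /andP [hu ne].
by have := inblock_uniq ht hu => e; rewrite e eqxx in ne.
Qed.

Lemma Dmx_out (N S : nat) (L : 'I_S -> nat) (k : int) (beta : 'I_S -> R) (i : 'I_N) :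
  (forall t, ~~ inblock L t i) -> Dmx N L k beta i i = 0.
Proof.
by move=> h; rewrite mxE eqxx big1 // => u hu; have := h u; rewrite hu.
Qed.

Lemma Peps_row (N S : nat) (L : 'I_S -> nat) (k : int) (beta : 'I_S -> R) (W : 'M[R]_N) eps
  (F : 'cV[C]_N) i :
  (Peps L k beta W eps *m F) i 0 = Dmx N L k beta i i * (F i 0 + eps%:C * wf W F i).
Proof.
rewrite /Peps -mulmxA mxE (bigD1 i) //= big1 ?addr0; last first.
  by move=> j ne; rewrite Dmx_off ?mul0r // eq_sym.
congr (_ * _); rewrite mxE /wf.
under eq_bigr => j _ do rewrite !mxE rmorphD rmorphM /= mulrDl -mulrA.
rewrite big_split /= mulr_sumr; congr (_ + _).
rewrite (bigD1 i) //= big1 ?addr0.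
  by rewrite eqxx /= rmorph1 mul1r.
by move=> j ne; rewrite eq_sym (negbTE ne) /= rmorph0 mul0r.
Qed.

Definition Mw (N : nat) (W : 'M[R]_N) : R := \sum_i \sum_j `|W i j|.

Lemma Mw_ge0 (N : nat) (W : 'M[R]_N) : 0 <= Mw W.
Proof. by apply: sumr_ge0 => i _; apply: sumr_ge0. Qed.

Lemma wfB (N : nat) (W : 'M[R]_N) (u v : 'cV[C]_N) i :
  wf W (u - v) i = wf W u i - wf W v i.
Proof. by rewrite /wf -sumrB; apply: eq_bigr => j _; rewrite !mxE mulrBr. Qed.

Lemma wf_bound (N : nat) (W : 'M[R]_N) (v : 'cV[C]_N) i (B : R) :
  0 <= B -> (forall l, nc (v l 0) <= B) -> nc (wf W v i) <= Mw W * B.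
Proof.
move=> B0 hB; apply: le_trans (nc_sum _ _ _) _.
apply: (@le_trans _ _ (\sum_j `|W i j| * B)).
  by apply: ler_sum => j _; rewrite ncM ncR; apply: ler_wpM2l.
rewrite -mulr_suml; apply: ler_wpM2r => //.
rewrite /Mw [leRHS](bigD1 i) //= lerDl.
by apply: sumr_ge0 => ? _; apply: sumr_ge0.
Qed.

End H.

Theorem lemma3p6 (R : realType) (N S : nat) (L : 'I_S -> nat)
  (W : 'M[R]_N) (k : int) (beta : 'I_S -> R)
  (f : R -> 'cV[R[i]]_N) (lam : R -> R[i]) (eps0 : R) (s : 'I_S)
  (g : 'cV[R[i]]_N) :
  (1 <= N)%N -> (1 <= S <= N)%N ->
  bandwidth N L ->
  admissible L W ->
  (forall t u : 'I_S,
     expi (- (2 * pi * k%:~R * beta t)) = expi (- (2 * pi * k%:~R * beta u)) ->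
     t = u) ->
  0 < eps0 ->
  (forall eps, 0 < eps < eps0 ->
     vnorm2 (f eps) = 1 /\ Peps L k beta W eps *m f eps = lam eps *: f eps) ->
  (forall d : R, 0 < d -> exists2 eta : R, 0 < eta &
     forall eps, 0 < eps < eta -> eps < eps0 ->
       `|lam eps - expi (- (2 * pi * k%:~R * beta s))| < d%:C) ->
  (* g is an accumulation point of f_eps as eps -> 0+ *)
  (forall d eta : R, 0 < d -> 0 < eta ->
     exists eps, [/\ 0 < eps, eps < eta, eps < eps0 & vnorm2 (f eps - g) < d%:C]) ->
  g != 0 /\ exists mu : R[i], Phat L k beta W *m g = mu *: g.
Proof.
move=> hN hS hbw hadm hinj heps0 hf hlam hacc.
pose es := ee k beta s.
pose D := Dmx N L k beta.
have es_nc : Normc.normc es = 1 by rewrite nc_expi.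
have es0 : es != 0.
  by apply/eqP => e; move: es_nc; rewrite e Normc.normc0 => /esym/eqP; rewrite oner_eq0.
have dA : forall i : 'I_N, inblock L s i -> D i i = es.
  by move=> i h; exact: Dmx_in h.
have dcase : forall i : 'I_N,
    Normc.normc (D i i) <= 1 /\ (~~ inblock L s i -> D i i != es).
  move=> i; case: (pickP (fun t => inblock L t i)) => [t ht | h].
    rewrite /D (@Dmx_in R N S L k beta i t ht) nc_expi; split => // hn; apply/eqP => e.
    have ts := hinj t s e; by rewrite ts in ht; rewrite ht in hn.
  rewrite /D (@Dmx_out R N S L k beta i) ?Normc.normc0; last by move=> t; rewrite h.
  by split => // _; rewrite eq_sym.
have row : forall eps, 0 < eps < eps0 -> forall i,
    D i i * (f eps i 0 + eps%:C * wf W (f eps) i) = lam eps * f eps i 0.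
  move=> eps he i; have [_ h] := hf eps he.
  by have := congr1 (fun M : 'cV[R[i]]_N => M i 0) h; rewrite Peps_row => ->; rewrite mxE.
have Fnc1 : forall eps, 0 < eps < eps0 -> forall l, Normc.normc (f eps l 0) <= 1.
  by move=> eps he l; apply: vn1; have [-> _] := hf eps he.
have Mw0 := Mw_ge0 W.
have gnz : g != 0.
  apply/eqP => g0; have [eps [e1 e2 e3 e4]] := hacc 1 1 ltr01 ltr01.
  have he : 0 < eps < eps0 by rewrite e1 e3.
  have [hn _] := hf eps he.
  by move: e4; rewrite g0 subr0 hn -[X in X < _]/(1%:C) ltcR ltxx.
have gA : forall kk : 'I_N, ~~ inblock L s kk -> g kk 0 = 0.
  move=> kk hk; apply: nc_eq0; apply/eqP; rewrite eq_le nc_ge0 andbT leNgt.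
  apply/negP => gpos.
  set gam := Normc.normc (g kk 0) in gpos *.
  have [dle1 dne] := dcase kk.
  have dne' := dne hk.
  set c := Normc.normc (D kk kk - es).
  have cpos : 0 < c.
    rewrite lt_neqAle nc_ge0 andbT eq_sym; apply/negP => /eqP /nc_eq0 /eqP.
    by rewrite subr_eq0; apply/negP.
  have c2 : 0 < c / 2 by lra.
  have [eta1 eta1p H1] := hlam (c / 2) c2.
  pose eta2 := gam * c / (4 * (Mw W + 1)).
  have eta2p : 0 < eta2 by rewrite /eta2 divr_gt0 ?mulr_gt0 //; lra.
  have g2 : 0 < gam / 2 by lra.
  have etap : 0 < Num.min eta1 eta2 by rewrite lt_min eta1p eta2p.
  have [eps [e1 e2 e3 e4]] := hacc ((gam / 2) ^+ 2) (Num.min eta1 eta2)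
     (exprn_gt0 _ g2) etap.
  move: e2; rewrite lt_min => /andP [e21 e22].
  have he : 0 < eps < eps0 by rewrite e1 e3.
  have hl := H1 eps (introT andP (conj e1 e21)) e3.
  rewrite ncE ltcR in hl.
  have hFg : Normc.normc (f eps kk 0 - g kk 0) < gam / 2.
    by have := @vnlt _ _ (f eps - g) kk (gam / 2) g2 e4; rewrite !mxE.
  have hr := row eps he kk.
  have nw : Normc.normc (wf W (f eps) kk) <= Mw W * 1.
    by apply: wf_bound => //; exact: Fnc1.
  rewrite mulr1 in nw.
  move: hr hl hFg nw dle1.
  set F := f eps kk 0; set w := wf W (f eps) kk; set lm := lam eps; set dk := D kk kk.
  move=> hr hl hFg nw dle1.
  have key : (dk - lm) * F = - (eps%:C * (dk * w)).
    apply/eqP; rewrite -subr_eq0; apply/eqP.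
    transitivity (dk * (F + eps%:C * w) - lm * F); first by ring.
    by rewrite hr subrr.
  have n1 : Normc.normc (dk - lm) * Normc.normc F
            = eps * (Normc.normc dk * Normc.normc w).
    by rewrite -ncM key ncN !ncM ncR ger0_norm // ltW.
  have ndl : c <= Normc.normc (dk - lm) + Normc.normc (lm - es).
    by rewrite /c; have := ncD (dk - lm) (lm - es); rewrite addrA subrK.
  have gle : gam <= Normc.normc F + Normc.normc (F - g kk 0).
    by have := ncD F (- (F - g kk 0)); rewrite ncN opprB addrC subrK.
  have h2 : Normc.normc dk * Normc.normc w <= Mw W.
    by rewrite -[Mw W]mul1r; apply: ler_pM => //; exact: nc_ge0.
  have nF0 := nc_ge0 F.
  have ndk0 := nc_ge0 dk.
  have nw0 := nc_ge0 w.
  have Pge : c / 2 <= Normc.normc (dk - lm) by lra.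
  move: e22; rewrite /eta2 ltr_pdivlMr; last by lra.
  move=> e22.
  have A1 : c / 2 * Normc.normc F <= eps * Mw W by nra.
  have A2 : c * Normc.normc F < c * (gam / 2) by nra.
  have A3 : Normc.normc F < gam / 2 by rewrite -(ltr_pM2l cpos).
  lra.
have Xg : forall i j : 'I_N, inblock L s i -> inblock L s j ->
    wf W g i * g j 0 = wf W g j * g i 0.
  move=> i j hi hj.
  have XF : forall eps, 0 < eps < eps0 ->
      wf W (f eps) i * f eps j 0 = wf W (f eps) j * f eps i 0.
    move=> eps he; have ri := row eps he i; have rj := row eps he j.
    rewrite (dA i hi) in ri; rewrite (dA j hj) in rj.
    have epsC : eps%:C != 0.
      apply/eqP => e0; have := ncR eps; rewrite e0 Normc.normc0 gtr0_norm.
        by move=> h; move: he; rewrite -h ltxx.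
      by case/andP: he.
    have ne : es * eps%:C != 0 by rewrite mulf_neq0.
    apply: (mulIf ne).
    transitivity ((es * (f eps i 0 + eps%:C * wf W (f eps) i) - es * f eps i 0)
                   * f eps j 0); first by ring.
    rewrite ri.
    transitivity ((es * (f eps j 0 + eps%:C * wf W (f eps) j) - es * f eps j 0)
                   * f eps i 0); last by ring.
    by rewrite rj; ring.
  pose X v := wf W v i * v j 0 - wf W v j * v i 0.
  suff : X g = 0 by move/eqP; rewrite subr_eq0 => /eqP.
  apply: nc_eq0; apply/eqP; rewrite eq_le nc_ge0 andbT leNgt; apply/negP => xpos.
  set xi := Normc.normc (X g) in xpos *.
  have dpos : 0 < 6 * Mw W + xi + 1 by lra.
  pose r := xi / (6 * Mw W + xi + 1).
  have rp : 0 < r by rewrite divr_gt0.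
  have rdef : r * (6 * Mw W + xi + 1) = xi by rewrite /r divfK // lt0r_neq0.
  have r1 : r <= 1 by nra.
  have r6 : 6 * Mw W * r < xi by nra.
  have [eps [e1 e2 e3 e4]] := hacc (r ^+ 2) 1 (exprn_gt0 _ rp) ltr01.
  have he : 0 < eps < eps0 by rewrite e1 e3.
  have hd : forall l, Normc.normc (g l 0 - f eps l 0) <= r.
    move=> l; rewrite ncB; apply: ltW.
    by have := @vnlt _ _ (f eps - g) l r rp e4; rewrite !mxE.
  have hF := Fnc1 eps he.
  have hg : forall l, Normc.normc (g l 0) <= 2.
    move=> l; have := ncD (g l 0 - f eps l 0) (f eps l 0); rewrite subrK => h.
    have := hd l; have := hF l; lra.
  have hXF : X (f eps) = 0 by rewrite /X XF // subrr.
  have eqX : X g = (wf W g i * (g j 0 - f eps j 0) + wf W (g - f eps) i * f eps j 0)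
      - (wf W g j * (g i 0 - f eps i 0) + wf W (g - f eps) j * f eps i 0).
    rewrite -[X g]subr0 -hXF /X !wfB; ring.
  have wg : forall l, Normc.normc (wf W g l) <= Mw W * 2.
    by move=> l; apply: wf_bound.
  have wd : forall l, Normc.normc (wf W (g - f eps) l) <= Mw W * r.
    move=> l; apply: wf_bound; first exact: ltW.
    by move=> m; rewrite !mxE; exact: hd.
  have T : forall a b, Normc.normc (wf W g a * (g b 0 - f eps b 0)
        + wf W (g - f eps) a * f eps b 0) <= 3 * Mw W * r.
    move=> a b; apply: le_trans (ncD _ _) _; rewrite !ncM.
    have := ler_pM (nc_ge0 _) (nc_ge0 _) (wg a) (hd b).
    have := ler_pM (nc_ge0 _) (nc_ge0 _) (wd a) (hF b).
    nra.
  have : xi <= 3 * Mw W * r + 3 * Mw W * r.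
    rewrite /xi eqX; apply: le_trans (ncD _ _) _; rewrite ncN.
    by apply: lerD; apply: T.
  lra.
have [j0 hj0] : exists j0, g j0 0 != 0.
  case: (pickP (fun j => g j 0 != 0)) => [j0 hj0 | h]; first by exists j0.
  exfalso; move/negP: gnz; apply; apply/eqP/matrixP => a b.
  rewrite (ord1 b) mxE; by move: (h a) => /negbFE/eqP.
have hj0A : inblock L s j0.
  by apply/negPn/negP => h; move: hj0; rewrite gA ?eqxx.
pose mu0 := wf W g j0 / g j0 0.
have hwf : forall i : 'I_N, inblock L s i -> wf W g i = mu0 * g i 0.
  move=> i hi; apply: (mulIf hj0); rewrite Xg // /mu0.
  by rewrite mulrAC divfK.
have hWh : forall i : 'I_N, (cmx (What L W) *m g) i 0 = if inblock L s i then wf W g i else 0.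
  move=> i; rewrite mxE /wf; case: ifP => hi.
    apply: eq_bigr => j _; rewrite !mxE.
    case: (boolP (inblock L s j)) => hj.
      have -> : [exists t, inblock L t i && inblock L t j] by apply/existsP; exists s; rewrite hi hj.
      by [].
    by rewrite gA // !mulr0.
  apply: big1 => j _; rewrite !mxE.
  case: (boolP (inblock L s j)) => hj; last by rewrite gA // mulr0.
  case: existsP => [[t /andP [ti tj]] | _]; last by rewrite rmorph0 mul0r.
  by have ts := inblock_uniq tj hj; rewrite ts hi in ti.
split => //; exists (es * mu0).
rewrite /Phat -mulmxA; apply/matrixP => i b; rewrite (ord1 b) {b}.
rewrite mxE (bigD1 i) //= big1 ?addr0; last first.
  by move=> j ne; rewrite Dmx_off ?mul0r // eq_sym.
rewrite hWh [in RHS]mxE; case: ifP => hi.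
  by rewrite (dA i hi) hwf // mulrA.
by rewrite gA ?hi // !mulr0.
Qed.
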